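(* In the setting of the elastoplastic system described in the context, assume $\mathrm{rank}(R^\top D)=q$ and the safe load condition $(C+Ah(t))\cap U^\perp\neq\emptyset$ for all $t$. If $$\|A^{-1}c^--A^{-1}c^+\|_A<\|g(t_1)-g(t_2)\|_A$$ for some $0\le t_1<t_2$, where $\|x\|_A=\sqrt{\langle x,Ax\rangle}$ and $c^\pm=(c_1^\pm,\dots,c_m^\pm)^\top$, then the sweeping process $-\dot y\in N^A_{\Pi(t)\cap V}(y)$ has no solutions that are constant on $[t_1,t_2]$.
   Context: Connected network, spring $k$ joins nodes $i_k,j_k$; $D$ with $(D\xi)_k=\xi_{j_k}-\xi_{i_k}$; $A=\mathrm{diag}(a_k)$, $a_k>0$; $C=\prod_k[c_k^-,c_k^+]$. Displacement-controlled loadings $l(t)\in\mathbb{R}^q$ with incidence matrix $R$ ($(R^k)^\top D\xi=\xi_{J_k}-\xi_{I_k}$); nodal forces $f(t)=-D^\top\bar h(t)$. $L$: an $n\times q$ matrix with $R^\top DL=I_q$. $U=\{x\in D\mathbb{R}^n:R^\top x=0\}$, $V=A^{-1}U^\perp$, $P_U,P_V$ the projections of $\mathbb{R}^m=U\oplus V$ (orthogonal for $\langle u,Av\rangle$). $g(t)=P_VDL\,l(t)$, $h(t)=P_UA^{-1}\bar h(t)$, $\Pi(t)=A^{-1}C+h(t)-g(t)$. $N^A_K(x)=\{\zeta:\langle\zeta,A(c-x)\rangle\le0\ \forall c\in K\}$ if $x\in K$, $\emptyset$ otherwise. *)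

(* Defs.v *)
From HB Require Import structures.
From mathcomp Require Import all_boot all_order all_algebra.
From mathcomp Require Import all_classical all_reals all_analysis.
Set Implicit Arguments. Unset Strict Implicit. Unset Printing Implicit Defensive.
Import Order.TTheory GRing.Theory Num.Theory.
Import numFieldNormedType.Exports.
Local Open Scope classical_set_scope.
Local Open Scope ring_scope.

Section Network.
Context {R : realType} {n m q : nat}.

Definition ip (u v : 'cV[R]_m) : R := \sum_(k < m) u k ord0 * v k ord0.

Definition Amx (a : 'I_m -> R) : 'M[R]_m := \matrix_(k, l) (if k == l then a k else 0).
Definition Ainv (a : 'I_m -> R) : 'M[R]_m := \matrix_(k, l) (if k == l then (a k)^-1 else 0).

Definition normA (a : 'I_m -> R) (x : 'cV[R]_m) : R := Num.sqrt (ip x (Amx a *m x)).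

Definition Dmx (i j : 'I_m -> 'I_n) : 'M[R]_(m, n) :=
  \matrix_(k, x) ((x == j k)%:R - (x == i k)%:R).

(* the spring network (nodes 'I_n, spring k joins i k and j k) is connected *)
Definition spring_rel (i j : 'I_m -> 'I_n) : rel 'I_n :=
  fun u v => [exists k, ((i k == u) && (j k == v)) || ((i k == v) && (j k == u))].
Definition connected_network (i j : 'I_m -> 'I_n) : Prop :=
  forall u v : 'I_n, connect (spring_rel i j) u v.

Definition Cbox (cm cp : 'I_m -> R) : set 'cV[R]_m :=
  [set c | forall k, cm k <= c k ord0 <= cp k].

Definition Uset (i j : 'I_m -> 'I_n) (Rm : 'M[R]_(m, q)) : set 'cV[R]_m :=
  [set x | (exists xi : 'cV[R]_n, x = Dmx i j *m xi) /\ Rm^T *m x = 0].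

Definition perp (S : set 'cV[R]_m) : set 'cV[R]_m :=
  [set w | forall u, S u -> ip u w = 0].

Definition Vset (a : 'I_m -> R) (i j : 'I_m -> 'I_n) (Rm : 'M[R]_(m, q)) : set 'cV[R]_m :=
  [set v | exists w, perp (Uset i j Rm) w /\ v = Ainv a *m w].

(* projections of R^m = U (+) V *)
Definition PU a i j Rm (x : 'cV[R]_m) : 'cV[R]_m :=
  xget 0 [set u | Uset i j Rm u /\ Vset a i j Rm (x - u)].
Definition PV a i j Rm (x : 'cV[R]_m) : 'cV[R]_m := x - PU a i j Rm x.

Definition NconeA (a : 'I_m -> R) (K : set 'cV[R]_m) (x : 'cV[R]_m) : set 'cV[R]_m :=
  [set z | K x /\ forall c, K c -> ip z (Amx a *m (c - x)) <= 0].

Definition gfun a i j Rm (L : 'M[R]_(n, q)) (l : R -> 'cV[R]_q) (t : R) : 'cV[R]_m :=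
  PV a i j Rm (Dmx i j *m L *m l t).
Definition hfun a i j Rm (hbar : R -> 'cV[R]_m) (t : R) : 'cV[R]_m :=
  PU a i j Rm (Ainv a *m hbar t).

Definition Pi a i j Rm cm cp L l hbar (t : R) : set 'cV[R]_m :=
  [set Ainv a *m c + hfun a i j Rm hbar t - gfun a i j Rm L l t | c in Cbox cm cp].

Definition sweeping_solution a i j Rm cm cp L l hbar (y : R -> 'cV[R]_m) : Prop :=
  let Z t := Pi a i j Rm cm cp L l hbar t `&` Vset a i j Rm in
  {within `[0, +oo[, continuous y} /\
  (forall t, 0 <= t -> Z t (y t)) /\
  (@lebesgue_measure R).-negligible
     [set t | 0 <= t /\ ~ (derivable y t 1 /\ NconeA a (Z t) (y t) (- 'D_1 y t))].

End Network.

(* Main.v *)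
Require Import Defs.
From HB Require Import structures.
From mathcomp Require Import all_boot all_order all_algebra.
From mathcomp Require Import all_classical all_reals all_analysis.
From mathcomp Require Import ring lra zify.
Import Order.TTheory GRing.Theory Num.Theory.
Import numFieldNormedType.Exports.
Local Open Scope classical_set_scope.
Local Open Scope ring_scope.

Section Aux.
Context {R : realType} {n m q : nat}.
Variable a : 'I_m -> R.
Hypothesis ha : forall k, 0 < a k.

Lemma Amx_col (v : 'cV[R]_m) k : (Amx a *m v) k ord0 = a k * v k ord0.
Proof.
rewrite mxE (bigD1 k) //= mxE eqxx big1 ?addr0 // => l /negbTE hl.
by rewrite mxE eq_sym hl mul0r.
Qed.

Lemma Ainv_col (v : 'cV[R]_m) k : (Ainv a *m v) k ord0 = (a k)^-1 * v k ord0.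
Proof.
rewrite mxE (bigD1 k) //= mxE eqxx big1 ?addr0 // => l /negbTE hl.
by rewrite mxE eq_sym hl mul0r.
Qed.

Lemma row_Amx (r : 'rV[R]_m) k : (r *m Amx a) ord0 k = r ord0 k * a k.
Proof.
rewrite mxE (bigD1 k) //= mxE eqxx big1 ?addr0 // => l /negbTE hl.
by rewrite mxE hl mulr0.
Qed.

Lemma Amx_tr : (Amx a)^T = Amx a.
Proof. by apply/matrixP => k l; rewrite !mxE eq_sym; case: eqP => // ->. Qed.

Lemma AAinv (w : 'cV[R]_m) : Amx a *m (Ainv a *m w) = w.
Proof.
apply/matrixP => k l; rewrite (ord1 l) Amx_col Ainv_col mulrA mulfV ?mul1r //.
exact: lt0r_neq0.
Qed.

Lemma quad_pos (r : 'rV[R]_m) : (r *m Amx a *m r^T) ord0 ord0 = 0 -> r = 0.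
Proof.
rewrite mxE => H.
have H1 : \sum_k r ord0 k * a k * r ord0 k = 0.
  by rewrite -[RHS]H; apply: eq_bigr => k _; rewrite row_Amx mxE.
have H2 : forall k, r ord0 k * a k * r ord0 k = 0.
  move=> k; apply: (psumr_eq0P _ H1) => // l _.
  by rewrite mulrAC mulr_ge0 ?(ltW (ha l)) // -expr2 sqr_ge0.
apply/matrixP => i k; rewrite (ord1 i) mxE.
move: (H2 k) => /eqP; rewrite !mulf_eq0 (negbTE (lt0r_neq0 (ha k))) orbF orbb.
by move/eqP.
Qed.

Lemma ipE (u v : 'cV[R]_m) : ip u v = (u^T *m v) ord0 ord0.
Proof. by rewrite /ip mxE; apply: eq_bigr => k _; rewrite mxE. Qed.

Variables (i j : 'I_m -> 'I_n) (Rm : 'M[R]_(m, q)).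

Lemma decomp (x : 'cV[R]_m) : exists u, Uset i j Rm u /\ Vset a i j Rm (x - u).
Proof.
pose M := Rm^T *m Dmx i j.
have [K [HK1 HK2]] : exists K : 'M[R]_n, K *m M^T = 0 /\
   forall p (X : 'M[R]_(p, n)), X *m M^T = 0 -> (X <= K)%MS.
  by exists (kermx M^T); split; [exact: mulmx_ker | move=> p X /sub_kermxP].
have [B defB] : exists B, B = Dmx i j *m K^T by eexists.
have [G defG] : exists G, G = B^T *m Amx a *m B by eexists.
have UB : forall z, Uset i j Rm (B *m z).
  move=> z; split; first by exists (K^T *m z); rewrite defB mulmxA.
  rewrite defB !mulmxA -/M.
  have -> : M *m K^T = 0 by rewrite -[M]trmxK -trmx_mul HK1 trmx0.
  by rewrite !mul0mx.
have BU : forall u, Uset i j Rm u -> exists v, u = B *m v.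
  move=> u [[xi ->] Hxi].
  have : (xi^T <= K)%MS.
    by apply: HK2; rewrite -trmx_mul /M -mulmxA Hxi trmx0.
  case/submxP => w Hw; exists w^T.
  by rewrite defB -mulmxA -trmx_mul -Hw trmxK.
have kerG : forall (p : nat) (U : 'M[R]_(p, n)), U *m G = 0 -> U *m B^T = 0.
  move=> p U HU; apply/row_matrixP => k; rewrite row_mul row0.
  apply: quad_pos.
  have E : row k U *m B^T *m Amx a *m (row k U *m B^T)^T = row k U *m G *m (row k U)^T.
    by rewrite defG trmx_mul trmxK !mulmxA.
  by rewrite E -row_mul HU row0 !mul0mx mxE.
have rG : \rank G = \rank B.
  have e1 : (kermx G == kermx B^T)%MS.
    apply/andP; split; apply/sub_kermxP.
      by apply: kerG; exact: mulmx_ker.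
    by rewrite defG !mulmxA mulmx_ker !mul0mx.
  have := mxrank_ker G; rewrite (eqmx_rank e1) mxrank_ker mxrank_tr.
  have h1 := rank_leq_col G; have h2 := rank_leq_col B.
  by move=> E; apply/eqP; rewrite eqn_leq; apply/andP; split; [|]; lia.
have sGB : (G <= B)%MS by rewrite defG submxMl.
have sBG : (B <= G)%MS.
  by rewrite -(mxrank_leqif_sup sGB).2 rG.
have : (x^T *m Amx a *m B <= G)%MS by apply: submx_trans sBG; rewrite submxMl.
case/submxP => z' Hz.
have Gz : G *m z'^T = B^T *m Amx a *m x.
  have GT : G^T = G by rewrite defG !trmx_mul trmxK Amx_tr mulmxA.
  by rewrite -GT -trmx_mul -Hz !trmx_mul trmxK Amx_tr mulmxA.
exists (B *m z'^T); split; first exact: UB.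
exists (Amx a *m (x - B *m z'^T)); split; last first.
  rewrite mulmxA.
  have -> : Ainv a *m Amx a = 1%:M.
    apply/matrixP => k l; rewrite !mxE (bigD1 k) //= big1 ?addr0.
      rewrite !mxE eqxx; case: eqP => [->|_]; [by rewrite mulVf ?lt0r_neq0 | by rewrite mulr0].
    by move=> l' /negbTE hl; rewrite !mxE eq_sym hl mul0r.
  by rewrite mul1mx.
have H0 : B^T *m Amx a *m (x - B *m z'^T) = 0.
  by rewrite mulmxBr mulmxA -defG Gz subrr.
move=> u /BU [v ->]; rewrite ipE trmx_mul -mulmxA (mulmxA B^T) H0 mulmx0.
by rewrite mxE.
Qed.

Lemma ipA (u v : 'cV[R]_m) : ip u (Amx a *m v) = \sum_k a k * u k ord0 * v k ord0.
Proof. by apply: eq_bigr => k _; rewrite Amx_col mulrCA mulrA. Qed.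

Lemma mxB p r (X Y : 'M[R]_(p, r)) k l : (X - Y) k l = X k l - Y k l.
Proof. by rewrite !mxE. Qed.

Lemma ipBr (u v w : 'cV[R]_m) : ip u (v - w) = ip u v - ip u w.
Proof. by rewrite /ip -sumrB; apply: eq_bigr => k _; rewrite mxB mulrBr. Qed.

Lemma qA_ge0 (v : 'cV[R]_m) : 0 <= ip v (Amx a *m v).
Proof.
rewrite ipA; apply: sumr_ge0 => k _.
by rewrite -mulrA mulr_ge0 ?(ltW (ha k)) // -expr2 sqr_ge0.
Qed.

Lemma qA_sub (e f : 'cV[R]_m) : ip f (Amx a *m e) = 0 ->
  ip (e - f) (Amx a *m (e - f)) = ip e (Amx a *m e) + ip f (Amx a *m f).
Proof.
rewrite !ipA => orth.
transitivity (\sum_k (a k * e k ord0 * e k ord0 + a k * f k ord0 * f k ord0)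
   - 2 * \sum_k a k * f k ord0 * e k ord0).
  by rewrite mulr_sumr -sumrB; apply: eq_bigr => k _; rewrite !mxB; ring.
by rewrite orth mulr0 subr0 big_split.
Qed.

Lemma Ucl_sub (u v : 'cV[R]_m) : Uset i j Rm u -> Uset i j Rm v -> Uset i j Rm (u - v).
Proof.
move=> [[x1 ->] H1] [[x2 ->] H2]; split; first by exists (x1 - x2); rewrite mulmxBr.
by rewrite mulmxBr H1 H2 subrr.
Qed.

Lemma Vcl_sub (u v : 'cV[R]_m) : Vset a i j Rm u -> Vset a i j Rm v -> Vset a i j Rm (u - v).
Proof.
move=> [w1 [P1 ->]] [w2 [P2 ->]]; exists (w1 - w2); split; last by rewrite mulmxBr.
by move=> z Hz; rewrite ipBr P1 // P2 // subrr.
Qed.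
End Aux.

Theorem proposition3 (R : realType) (n m q : nat)
    (i j : 'I_m -> 'I_n) (a cm cp : 'I_m -> R)
    (I J : 'I_q -> 'I_n) (Rm : 'M[R]_(m, q)) (L : 'M[R]_(n, q))
    (l : R -> 'cV[R]_q) (hbar : R -> 'cV[R]_m) (t1 t2 : R) :
  connected_network i j ->
  (forall k, i k != j k) ->
  (forall k, 0 < a k) ->
  (forall k, cm k <= cp k) ->
  (forall xi : 'cV[R]_n,
      Rm^T *m (Dmx i j *m xi) = \col_(k < q) (xi (J k) ord0 - xi (I k) ord0)) ->
  Rm^T *m Dmx i j *m L = 1%:M ->
  \rank (Rm^T *m Dmx i j) = q ->
  (forall t, 0 <= t -> exists c, Cbox cm cp c /\
      perp (Uset i j Rm) (c + Amx a *m hfun a i j Rm hbar t)) ->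
  0 <= t1 -> t1 < t2 ->
  normA a (Ainv a *m \col_(k < m) cm k - Ainv a *m \col_(k < m) cp k)
    < normA a (gfun a i j Rm L l t1 - gfun a i j Rm L l t2) ->
  ~ exists y : R -> 'cV[R]_m,
      sweeping_solution a i j Rm cm cp L l hbar y /\
      (forall t, t1 <= t <= t2 -> y t = y t1).
Proof.
move=> _ _ ha _ _ _ _ _ ht1 ht12 hlt [y [[_ [hZ _]] hc1]].
have ht2 : 0 <= t2 by apply: le_trans ht1 (ltW ht12).
have [[c1 Hc1 E1] _] := hZ t1 ht1.
have [[c2 Hc2 E2] _] := hZ t2 ht2.
have Ey : y t2 = y t1 by apply: hc1; rewrite (ltW ht12) lexx.
rewrite Ey in E2.
have Uh : forall t, Uset i j Rm (hfun a i j Rm hbar t).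
  by move=> t; case: (xgetPex 0 (decomp _ ha i j Rm (Ainv a *m hbar t))).
have Vg : forall t, Vset a i j Rm (gfun a i j Rm L l t).
  by move=> t; case: (xgetPex 0 (decomp _ ha i j Rm (Dmx i j *m L *m l t))).
set h1 := hfun a i j Rm hbar t1 in E1 Uh.
set h2 := hfun a i j Rm hbar t2 in E2 Uh.
set g1 := gfun a i j Rm L l t1 in E1 Vg hlt.
set g2 := gfun a i j Rm L l t2 in E2 Vg hlt.
have Uf : Uset i j Rm (h1 - h2) by apply: Ucl_sub; apply: Uh.
have [w [Pw Ew]] : Vset a i j Rm (g1 - g2) by apply: Vcl_sub; apply: Vg.
have key : (g1 - g2) - (h1 - h2) = Ainv a *m c1 - Ainv a *m c2.
  apply/matrixP => k l'.
  move/matrixP: (etrans E1 (esym E2)) => /(_ k l').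
  rewrite !mxB !mxE => H; lra.
have orth : ip (h1 - h2) (Amx a *m (g1 - g2)) = 0 by rewrite Ew AAinv // Pw.
have q1 := qA_sub _ _ _ orth; rewrite key in q1.
have le1 : ip (g1 - g2) (Amx a *m (g1 - g2)) <=
   ip (Ainv a *m c1 - Ainv a *m c2) (Amx a *m (Ainv a *m c1 - Ainv a *m c2)).
  by rewrite q1 lerDl qA_ge0.
set dd := Ainv a *m \col_(k < m) cm k - Ainv a *m \col_(k < m) cp k.
have le2 : ip (Ainv a *m c1 - Ainv a *m c2) (Amx a *m (Ainv a *m c1 - Ainv a *m c2))
    <= ip dd (Amx a *m dd).
  rewrite !ipA; apply: ler_sum => k _.
  rewrite /dd !mxB !Ainv_col !mxE.
  have hk := ha k; have hb : 0 < (a k)^-1 by rewrite invr_gt0.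
  have [h11 h12] := andP (Hc1 k); have [h21 h22] := andP (Hc2 k).
  set b := (a k)^-1.
  have -> : a k * (b * c1 k ord0 - b * c2 k ord0) * (b * c1 k ord0 - b * c2 k ord0)
     = (a k * b * b) * ((c1 k ord0 - c2 k ord0) * (c1 k ord0 - c2 k ord0)) by ring.
  have -> : a k * (b * cm k - b * cp k) * (b * cm k - b * cp k)
     = (a k * b * b) * ((cp k - cm k) * (cp k - cm k)) by ring.
  apply: ler_wpM2l; first by rewrite !mulr_ge0 // ltW.
  rewrite -subr_ge0.
  have -> : (cp k - cm k) * (cp k - cm k) - (c1 k ord0 - c2 k ord0) * (c1 k ord0 - c2 k ord0)
     = (cp k - cm k - (c1 k ord0 - c2 k ord0)) * (cp k - cm k + (c1 k ord0 - c2 k ord0)) by ring.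
  by apply: mulr_ge0; lra.
have : normA a (g1 - g2) <= normA a dd.
  by rewrite /normA ler_wsqrtr // (le_trans le1 le2).
by rewrite leNgt hlt.
Qed.
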